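(* Let $B$ be a skew brace. Then a subset $P\subseteq B$ is an equivalence class of some congruence on $B$ if and only if $P$ is a paragon in $\mathrm{T}(B)$.
   Context: A skew brace is $(B,+,\cdot)$ with $(B,+)$ and $(B,\cdot)$ groups and $a(b+c)=ab-a+ac$. A congruence on $B$ is an equivalence relation compatible with both group operations. $\mathrm{T}(B)$ is $B$ with ternary operation $[a,b,c]=a-b+c$ and the multiplication of $B$. A normal sub-heap is a non-empty subset $S$ closed under $[-,-,-]$ with $[[a,e,s],a,e]\in S$ for all $a$ and $e,s\in S$; $a\sim_S b$ iff $[a,b,s]\in S$ for some (equivalently all) $s\in S$. A sub-heap $S$ is closed if $[ts',ts,s]\in S$ and $[s't,st,s]\in S$ for all $s,s'\in S$, $t$. A paragon is a non-empty normal sub-heap $P$ all of whose $\sim_P$-classes are closed sub-heaps. *)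

(* Defs.v *)
Record SkewBrace := {
  carrier :> Type;
  add : carrier -> carrier -> carrier;
  opp : carrier -> carrier;
  zero : carrier;
  mul : carrier -> carrier -> carrier;
  inv : carrier -> carrier;
  one : carrier;
  addA : forall a b c, add a (add b c) = add (add a b) c;
  add0l : forall a, add zero a = a;
  add0r : forall a, add a zero = a;
  addNl : forall a, add (opp a) a = zero;
  addNr : forall a, add a (opp a) = zero;
  mulA : forall a b c, mul a (mul b c) = mul (mul a b) c;
  mul1l : forall a, mul one a = a;
  mul1r : forall a, mul a one = a;
  mulVl : forall a, mul (inv a) a = one;
  mulVr : forall a, mul a (inv a) = one;
  brace_law : forall a b c,
    mul a (add b c) = add (add (mul a b) (opp a)) (mul a c)
}.

Section Defs.
Variable B : SkewBrace.

Definition congruence (R : B -> B -> Prop) : Prop :=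
  (forall a, R a a) /\
  (forall a b, R a b -> R b a) /\
  (forall a b c, R a b -> R b c -> R a c) /\
  (forall a a' b b', R a a' -> R b b' -> R (add B a b) (add B a' b')) /\
  (forall a a' b b', R a a' -> R b b' -> R (mul B a b) (mul B a' b')).

Definition is_class_of (R : B -> B -> Prop) (P : B -> Prop) : Prop :=
  exists a, forall x, P x <-> R a x.

(* The truss T(B): ternary heap operation [a,b,c] = a - b + c,
   multiplication is that of B. *)
Definition tern (a b c : B) : B := add B (add B a (opp B b)) c.

Definition sub_heap (S : B -> Prop) : Prop :=
  forall a b c, S a -> S b -> S c -> S (tern a b c).

Definition normal_sub_heap (S : B -> Prop) : Prop :=
  (exists s, S s) /\ sub_heap S /\
  (forall a e s, S e -> S s -> S (tern (tern a e s) a e)).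

Definition sim (S : B -> Prop) (a b : B) : Prop :=
  exists s, S s /\ S (tern a b s).

Definition closed_sub_heap (S : B -> Prop) : Prop :=
  sub_heap S /\
  (forall s s' t, S s -> S s' ->
     S (tern (mul B t s') (mul B t s) s) /\
     S (tern (mul B s' t) (mul B s t) s)).

Definition paragon (P : B -> Prop) : Prop :=
  (exists p, P p) /\ normal_sub_heap P /\
  (forall a, closed_sub_heap (fun x => sim P a x)).

End Defs.

(* Main.v *)
Require Import Defs.

Lemma inv_uniq (B : SkewBrace) (x z : B) : add B x z = zero B -> opp B x = z.
Proof.
  intro H. rewrite <- (add0r B (opp B x)). rewrite <- H.
  rewrite addA, addNl, add0l. reflexivity.
Qed.

Lemma opp_add (B : SkewBrace) (x y : B) :
  opp B (add B x y) = add B (opp B y) (opp B x).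
Proof.
  apply inv_uniq. rewrite addA, <- (addA B x y), addNr, add0r, addNr. reflexivity.
Qed.

Lemma opp_opp (B : SkewBrace) (x : B) : opp B (opp B x) = x.
Proof. apply inv_uniq. apply addNl. Qed.

Lemma opp0 (B : SkewBrace) : opp B (zero B) = zero B.
Proof. apply inv_uniq. apply add0l. Qed.

Lemma addKN (B : SkewBrace) (x y : B) : add B (add B x y) (opp B y) = x.
Proof. rewrite <- addA, addNr, add0r. reflexivity. Qed.

Lemma addNK (B : SkewBrace) (x y : B) : add B (add B x (opp B y)) y = x.
Proof. rewrite <- addA, addNl, add0r. reflexivity. Qed.

Ltac gsimpl := unfold tern; repeat (rewrite ?opp_add, ?opp_opp, ?opp0, ?addA, ?addKN, ?addNK,
  ?add0l, ?add0r, ?addNr, ?addNl).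

Lemma eqP (B : SkewBrace) (P : B -> Prop) a b : P a -> a = b -> P b.
Proof. intros H E; subst; exact H. Qed.

Lemma R_l (B : SkewBrace) (R : B -> B -> Prop) x x' y : x' = x -> R x' y -> R x y.
Proof. intros E H; subst; exact H. Qed.

Lemma Ropp (B : SkewBrace) (R : B -> B -> Prop) : congruence B R ->
  forall x y, R x y -> R (opp B x) (opp B y).
Proof.
  intros [Rr [Rs [Rt [Ra Rm]]]] x y H.
  apply Rs.
  assert (H2 : R (add B (add B (opp B x) x) (opp B y)) (add B (add B (opp B x) y) (opp B y))).
  { apply Ra; [apply Ra; [apply Rr | exact H] | apply Rr]. }
  rewrite addNl, add0l, addKN in H2. exact H2.
Qed.

Ltac compat Rr Rs Ra Rm Ro :=
  repeat (first [assumption | apply Rr | (apply Rs; assumption)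
         | apply Ra | apply Rm | apply Ro]).

Theorem corollary3p17 (B : SkewBrace) (P : B -> Prop) :
  (exists R : B -> B -> Prop, congruence B R /\ is_class_of B R P) <->
  paragon B P.
Proof.
  split.
  - intros [R [HC [a Ha]]].
    pose proof (Ropp B R HC) as Ro.
    destruct HC as [Rr [Rs [Rt [Ra Rm]]]].
    assert (SIM : forall b x, sim B P b x <-> R b x).
    { intros b x; split.
      - intros [s [Ps Pt]]. apply Ha in Ps. apply Ha in Pt.
        assert (H1 : R (tern B b x a) a).
        { apply (Rt _ (tern B b x s)).
          - unfold tern; compat Rr Rs Ra Rm Ro.
          - apply Rs; exact Pt. }
        assert (H2 : R (add B (add B (tern B b x a) (opp B a)) x)
                       (add B (add B a (opp B a)) x)).
        { compat Rr Rs Ra Rm Ro. }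
        revert H2. gsimpl. auto.
      - intro H. exists a. split; [apply Ha; apply Rr|]. apply Ha.
        apply (R_l B R _ (tern B x x a)); [gsimpl; reflexivity|].
        unfold tern; compat Rr Rs Ra Rm Ro. }
    split; [exists a; apply Ha, Rr|]. split.
    + split; [exists a; apply Ha, Rr|]. split.
      * intros x y z Hx Hy Hz. apply Ha in Hx, Hy, Hz. apply Ha.
        apply (R_l B R _ (tern B a a a)); [gsimpl; reflexivity|].
        unfold tern; compat Rr Rs Ra Rm Ro.
      * intros b e s He Hs. apply Ha in He, Hs. apply Ha.
        apply (R_l B R _ (tern B (tern B b a a) b a)); [gsimpl; reflexivity|].
        unfold tern; compat Rr Rs Ra Rm Ro.
    + intro b. split.
      * intros x y z Hx Hy Hz. apply SIM in Hx, Hy, Hz. apply SIM.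
        apply (R_l B R _ (tern B b b b)); [gsimpl; reflexivity|].
        unfold tern; compat Rr Rs Ra Rm Ro.
      * intros s s' t Hs Hs'. apply SIM in Hs, Hs'. split; apply SIM.
        -- apply (R_l B R _ (tern B (mul B t b) (mul B t b) b)); [gsimpl; reflexivity|].
           unfold tern; compat Rr Rs Ra Rm Ro.
        -- apply (R_l B R _ (tern B (mul B b t) (mul B b t) b)); [gsimpl; reflexivity|].
           unfold tern; compat Rr Rs Ra Rm Ro.
  - intros [[p Pp] [[_ [SH NM]] CL]].
    set (D := fun x => P (add B x p)).
    assert (D0 : D (zero B)) by (unfold D; rewrite add0l; exact Pp).
    assert (Dsub : forall x y, D x -> D y -> D (add B x (opp B y))).
    { intros x y Hx Hy. unfold D in *. eapply eqP; [apply (SH _ _ _ Hx Hy Pp)|].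
      gsimpl. reflexivity. }
    assert (Dopp : forall y, D y -> D (opp B y)).
    { intros y Hy. eapply eqP; [apply (Dsub _ _ D0 Hy)|]. gsimpl. reflexivity. }
    assert (Dadd : forall x y, D x -> D y -> D (add B x y)).
    { intros x y Hx Hy. eapply eqP; [apply (Dsub _ _ Hx (Dopp _ Hy))|]. gsimpl. reflexivity. }
    assert (Dconj : forall a n, D n -> D (add B (add B a n) (opp B a))).
    { intros a n Hn. unfold D in *.
      eapply eqP; [apply (NM (add B a p) p (add B n p) Pp Hn)|]. gsimpl. reflexivity. }
    assert (simD : forall a b, sim B P a b <-> D (add B a (opp B b))).
    { intros a b; split.
      - intros [s [Ps Pt]]. unfold D. eapply eqP; [apply (SH _ _ _ Pt Ps Pp)|].
        gsimpl. reflexivity.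
      - intro H. exists p. split; [exact Pp|]. unfold tern. exact H. }
    assert (Lmul : forall a b t, sim B P a b -> sim B P (mul B t a) (mul B t b)).
    { intros a b t H. destruct (CL a) as [_ C].
      assert (Ha : sim B P a a) by (apply simD; rewrite addNr; exact D0).
      destruct (C a b t Ha H) as [C1 _].
      apply simD in C1. apply simD.
      eapply eqP; [exact C1|]. gsimpl. reflexivity. }
    assert (Rmul : forall a b t, sim B P a b -> sim B P (mul B a t) (mul B b t)).
    { intros a b t H. destruct (CL a) as [_ C].
      assert (Ha : sim B P a a) by (apply simD; rewrite addNr; exact D0).
      destruct (C a b t Ha H) as [_ C1].
      apply simD in C1. apply simD.
      eapply eqP; [exact C1|]. gsimpl. reflexivity. }
    assert (Strans : forall a b c, sim B P a b -> sim B P b c -> sim B P a c).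
    { intros a b c H1 H2. apply simD in H1, H2. apply simD.
      eapply eqP; [apply (Dadd _ _ H1 H2)|]. gsimpl. reflexivity. }
    exists (sim B P). split.
    + split; [|split; [|split; [|split]]].
      * intro a. apply simD. rewrite addNr. exact D0.
      * intros a b H. apply simD in H. apply simD. apply Dopp in H.
        eapply eqP; [exact H|]. gsimpl. reflexivity.
      * exact Strans.
      * intros a a' b b' H1 H2. apply simD in H1, H2. apply simD.
        eapply eqP; [apply (Dadd _ _ H1 (Dconj a' _ H2))|]. gsimpl. reflexivity.
      * intros a a' b b' H1 H2. apply (Strans _ (mul B a' b)).
        -- apply Rmul; exact H1.
        -- apply Lmul; exact H2.
    + exists p. intro x. split.
      * intro Hx. apply simD. unfold D. eapply eqP; [apply (SH _ _ _ Pp Hx Pp)|].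
        reflexivity.
      * intro H. apply simD in H. unfold D in H.
        eapply eqP; [apply (SH _ _ _ Pp H Pp)|]. gsimpl. reflexivity.
Qed.
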